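(* Let $(X,f)$ be a dynamical system. Then (1) $(X,f)$ is weakly mixing if and only if it is $\nabla(\mathcal{F}_t)$-point transitive; (2) $(X,f)$ is strongly mixing if and only if it is $\nabla(\mathcal{F}_{cf})$-point transitive.
   Context: A dynamical system is a pair $(X,f)$ with $X$ a compact metric space and $f:X\to X$ continuous. $\mathbb{N}=\{1,2,\dots\}$. For $U,V\subset X$ and $x\in X$: $N(U,V)=\{n\in\mathbb{N}: U\cap f^{-n}(V)\neq\emptyset\}$ and $N(x,U)=\{n\in\mathbb{N}: f^n(x)\in U\}$. $(X,f)$ is weakly mixing if $(X\times X,f\times f)$ is transitive (i.e. hitting time sets of non-empty open sets are non-empty), and strongly mixing if $N(U,V)$ is cofinite for all non-empty open $U,V\subset X$. $\mathcal{F}_t$ is the family of thick sets: $F\subset\mathbb{N}$ such that for every $n$ there is $a\in\mathbb{N}$ with $\{a,a+1,\dots,a+n\}\subset F$. $\mathcal{F}_{cf}$ is the family of cofinite subsets of $\mathbb{N}$. For a family $\mathcal{F}$ of subsets of $\mathbb{N}$, a point $x$ is an $\mathcal{F}$-transitive point if $N(x,U)\in\mathcal{F}$ for every non-empty open $U\subset X$, and $(X,f)$ is $\mathcal{F}$-point transitive if such a point exists. For $F\subset\mathbb{N}$, $F-F=\{a-b: a,b\in F,\ a>b\}$, and $\nabla(\mathcal{F})=\{F\subset\mathbb{N}: F-F\in\mathcal{F}\}$. *)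

(* Defs.v *)
From Stdlib Require Import Reals List.
Open Scope R_scope.

Section Defs.
Variable X : Type.
Variable d : X -> X -> R.

Definition is_metric : Prop :=
  (forall x y, 0 <= d x y) /\
  (forall x y, d x y = 0 <-> x = y) /\
  (forall x y, d x y = d y x) /\
  (forall x y z, d x z <= d x y + d y z).

Definition is_open (U : X -> Prop) : Prop :=
  forall x, U x -> exists eps, 0 < eps /\ forall y, d x y < eps -> U y.

Definition is_open_prod (W : X * X -> Prop) : Prop :=
  forall p, W p -> exists eps, 0 < eps /\
    forall q, d (fst p) (fst q) < eps -> d (snd p) (snd q) < eps -> W q.

Definition is_compact : Prop :=
  forall (I : Type) (U : I -> X -> Prop),
    (forall i, is_open (U i)) -> (forall x, exists i, U i x) ->
    exists l : list I, forall x, exists i, In i l /\ U i x.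

Definition is_continuous (f : X -> X) : Prop :=
  forall x eps, 0 < eps -> exists delta, 0 < delta /\
    forall y, d x y < delta -> d (f x) (f y) < eps.
End Defs.

(* Subsets of N = {1,2,...} are predicates on nat; families are predicates on them. *)

Definition hitN {Y : Type} (g : Y -> Y) (U V : Y -> Prop) (n : nat) : Prop :=
  (1 <= n)%nat /\ exists y, U y /\ V (Nat.iter n g y).

Definition visitN {Y : Type} (g : Y -> Y) (x : Y) (U : Y -> Prop) (n : nat) : Prop :=
  (1 <= n)%nat /\ U (Nat.iter n g x).

Definition prod_map {Y : Type} (g : Y -> Y) (p : Y * Y) : Y * Y := (g (fst p), g (snd p)).

Definition weakly_mixing {X : Type} (d : X -> X -> R) (f : X -> X) : Prop :=
  forall W1 W2 : X * X -> Prop,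
    is_open_prod X d W1 -> is_open_prod X d W2 ->
    (exists p, W1 p) -> (exists p, W2 p) ->
    exists n, hitN (prod_map f) W1 W2 n.

Definition thick (F : nat -> Prop) : Prop :=
  forall n : nat, exists a : nat, (1 <= a)%nat /\ forall k, (k <= n)%nat -> F (a + k)%nat.

Definition cofinite (F : nat -> Prop) : Prop :=
  exists m : nat, forall n : nat, (1 <= n)%nat -> (m <= n)%nat -> F n.

Definition strongly_mixing {X : Type} (d : X -> X -> R) (f : X -> X) : Prop :=
  forall U V : X -> Prop, is_open X d U -> is_open X d V ->
    (exists x, U x) -> (exists x, V x) -> cofinite (hitN f U V).

Definition diffset (F : nat -> Prop) (n : nat) : Prop :=
  exists a b, F a /\ F b /\ (b < a)%nat /\ n = (a - b)%nat.

Definition nabla (Fam : (nat -> Prop) -> Prop) (F : nat -> Prop) : Prop :=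
  Fam (diffset F).

Definition transitive_point {X : Type} (d : X -> X -> R) (f : X -> X)
  (Fam : (nat -> Prop) -> Prop) (x : X) : Prop :=
  forall U : X -> Prop, is_open X d U -> (exists y, U y) -> Fam (visitN f x U).

Definition point_transitive {X : Type} (d : X -> X -> R) (f : X -> X)
  (Fam : (nat -> Prop) -> Prop) : Prop :=
  exists x, transitive_point d f Fam x.

(* Main.v *)
Require Import Defs.
From Stdlib Require Import Reals List Lra Lia Classical ClassicalEpsilon.
Open Scope R_scope.

Definition trans {X : Type} (d : X -> X -> R) (f : X -> X) : Prop :=
  forall U V : X -> Prop, is_open X d U -> is_open X d V ->
    (exists x, U x) -> (exists x, V x) ->
    exists n w, (1 <= n)%nat /\ U w /\ V (Nat.iter n f w).

Lemma open_ball X d (Hd : is_metric X d) c e : is_open X d (fun z => d c z < e).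
Proof.
  destruct Hd as (H0 & H1 & H2 & H3).
  intros z Hz. exists (e - d c z). split; [lra|].
  intros y Hy. specialize (H3 c z y). lra.
Qed.

Lemma open_inter X d (U V : X -> Prop) : is_open X d U -> is_open X d V ->
  is_open X d (fun z => U z /\ V z).
Proof.
  intros HU HV z [Uz Vz].
  destruct (HU z Uz) as (e1 & He1 & H1). destruct (HV z Vz) as (e2 & He2 & H2).
  exists (Rmin e1 e2). split. apply Rmin_glb_lt; lra.
  intros y Hy. split; [apply H1|apply H2];
  pose proof (Rmin_l e1 e2); pose proof (Rmin_r e1 e2); lra.
Qed.

Lemma iter_cont X d f (Hf : is_continuous X d f) n : is_continuous X d (Nat.iter n f).
Proof.
  induction n as [|n IH]; intros x eps He.
  - exists eps; split; auto.
  - destruct (Hf (Nat.iter n f x) eps He) as (d1 & Hd1 & H1).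
    destruct (IH x d1 Hd1) as (d2 & Hd2 & H2).
    exists d2; split; auto. intros y Hy. simpl. apply H1, H2, Hy.
Qed.

Lemma open_pre X d f (Hf : is_continuous X d f) n (U : X -> Prop) :
  is_open X d U -> is_open X d (fun z => U (Nat.iter n f z)).
Proof.
  intros HU z Uz. destruct (HU _ Uz) as (e & He & H).
  destruct (iter_cont X d f Hf n z e He) as (dl & Hdl & H2).
  exists dl; split; auto.
Qed.

Lemma iter_prod {Y} (g : Y -> Y) n p :
  Nat.iter n (prod_map g) p = (Nat.iter n g (fst p), Nat.iter n g (snd p)).
Proof.
  induction n; simpl. destruct p; auto. rewrite IHn. reflexivity.
Qed.

Lemma iter_comm {Y} (g : Y -> Y) n m y :
  Nat.iter n g (Nat.iter m g y) = Nat.iter m g (Nat.iter n g y).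
Proof. rewrite <- !Nat.iter_add. f_equal. lia. Qed.

Lemma open_prod_box X d (U V : X -> Prop) : is_open X d U -> is_open X d V ->
  is_open_prod X d (fun p => U (fst p) /\ V (snd p)).
Proof.
  intros HU HV [a b] [Ua Vb]. simpl in *.
  destruct (HU a Ua) as (e1 & He1 & H1). destruct (HV b Vb) as (e2 & He2 & H2).
  exists (Rmin e1 e2). split. apply Rmin_glb_lt; lra.
  intros q Hq1 Hq2. split; [apply H1|apply H2];
  pose proof (Rmin_l e1 e2); pose proof (Rmin_r e1 e2); lra.
Qed.

Lemma iterE {Y} (g : Y -> Y) a b y : Nat.iter a g (Nat.iter b g y) = Nat.iter (a + b) g y.
Proof. symmetry; apply Nat.iter_add. Qed.

Lemma wm_trans (X : Type) d (f : X -> X) : weakly_mixing d f -> trans d f.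
Proof.
  intros H U V HU HV [u Uu] [v Vv].
  destruct (H (fun p => U (fst p) /\ U (snd p)) (fun p => V (fst p) /\ V (snd p)))
    as (n & Hn & y & [Hy1 Hy2] & [Hz1 Hz2]).
  1,2: apply open_prod_box; auto.
  1: exists (u, u); simpl; auto.
  1: exists (v, v); simpl; auto.
  rewrite iter_prod in Hz1, Hz2. simpl in *.
  exists n, (fst y). auto.
Qed.

Lemma sm_trans (X : Type) d (f : X -> X) : strongly_mixing d f -> trans d f.
Proof.
  intros H U V HU HV HUn HVn.
  destruct (H U V HU HV HUn HVn) as [m Hm].
  destruct (Hm (S m)) as (_ & w & Uw & Vw); try lia.
  exists (S m), w. split; [lia|auto].
Qed.

Lemma pre_nonempty (X : Type) d (f : X -> X) (Hf : is_continuous X d f) :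
  trans d f -> forall U, is_open X d U -> (exists x, U x) ->
  forall k, exists w, U (Nat.iter k f w).
Proof.
  intros Ht U HU HUn k. induction k as [|k IH].
  - exact HUn.
  - destruct (Ht (fun z => U (Nat.iter k f z)) (fun z => U (Nat.iter k f z)))
      as (n & w & Hn & _ & Hw); auto using open_pre.
    exists (Nat.iter (n - 1) f w). rewrite iterE.
    rewrite iterE in Hw. replace (S k + (n - 1))%nat with (k + n)%nat by lia. exact Hw.
Qed.

Lemma furst (X : Type) d (f : X -> X) (Hf : is_continuous X d f) :
  weakly_mixing d f -> forall U, is_open X d U -> (exists x, U x) ->
  forall n, exists A B, is_open X d A /\ is_open X d B /\ (exists x, A x) /\ (exists x, B x) /\
    forall m y, A y -> B (Nat.iter m f y) -> forall k, (k <= n)%nat ->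
      exists z, U z /\ U (Nat.iter (m + k) f z).
Proof.
  intros Hw U HU HUn n. destruct HUn as [u Uu] eqn:EU. pose proof (wm_trans X d f Hw) as Ht.
  induction n as [|n IH].
  - exists U, U. repeat split; auto.
    intros m y Ay By k Hk. exists y. split; auto.
    replace (m + k)%nat with m by lia. auto.
  - destruct IH as (A & B & HA & HB & [a Aa] & [b Bb] & HP).
    set (V2 := fun z => U (Nat.iter (S n) f z)).
    assert (HV2 : is_open X d V2) by (apply open_pre; auto).
    destruct (pre_nonempty X d f Hf Ht U HU (ex_intro _ u Uu) (S n)) as [v Hv].
    destruct (Hw (fun p => A (fst p) /\ B (snd p)) (fun p => U (fst p) /\ V2 (snd p)))
      as (m0 & Hm0 & p & [Hp1 Hp2] & [Hq1 Hq2]).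
    1,2: apply open_prod_box; auto.
    1: exists (a, b); simpl; auto.
    1: exists (u, v); simpl; auto.
    rewrite iter_prod in Hq1, Hq2. simpl in *.
    exists (fun y => A y /\ U (Nat.iter m0 f y)), (fun y => B y /\ V2 (Nat.iter m0 f y)).
    repeat split.
    + apply open_inter; auto. apply open_pre; auto.
    + apply open_inter; auto. apply open_pre; auto.
    + exists (fst p); auto.
    + exists (snd p); auto.
    + intros m y [Ay Uy] [By Vy] k Hk.
      destruct (Nat.eq_dec k (S n)) as [->|Hne].
      * exists (Nat.iter m0 f y). split; auto.
        unfold V2 in Vy. rewrite !iterE in Vy |- *.
        rewrite <- (Nat.iter_succ (n + m0)), iterE in Vy.
        replace (m + S n + m0)%nat with (S (n + m0) + m)%nat by lia. exact Vy.
      * apply (HP m y Ay By). lia.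
Qed.

Lemma step1 (X : Type) d (f : X -> X) (Hd : is_metric X d) (Hf : is_continuous X d f) :
  trans d f -> forall y r c e, 0 < r -> 0 < e -> exists y' r', 0 < r' /\
   (forall z, d y' z <= r' -> d y z < r) /\
   exists n, (1 <= n)%nat /\ forall z, d y' z <= r' -> d c (Nat.iter n f z) < e.
Proof.
  intros Ht y r c e Hr He.
  pose proof Hd as (H0 & H1 & H2 & H3).
  assert (Hz : forall c, d c c = 0) by (intros c'; apply H1; auto).
  destruct (Ht (fun z => d y z < r) (fun z => d c z < e)) as (n & w & Hn & Hw1 & Hw2);
    try apply open_ball; auto; [exists y; rewrite Hz; auto|exists c; rewrite Hz; auto|].
  destruct (iter_cont X d f Hf n w (e - d c (Nat.iter n f w))) as (dl & Hdl & Hc); [lra|].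
  exists w, (Rmin dl (r - d y w) / 2). split.
  { assert (0 < Rmin dl (r - d y w)) by (apply Rmin_glb_lt; lra). lra. }
  assert (Hm1 := Rmin_l dl (r - d y w)). assert (Hm2 := Rmin_r dl (r - d y w)).
  assert (0 < Rmin dl (r - d y w)) by (apply Rmin_glb_lt; lra).
  split.
  - intros z Hzz. specialize (H3 y w z). lra.
  - exists n. split; auto. intros z Hzz.
    assert (d (Nat.iter n f w) (Nat.iter n f z) < e - d c (Nat.iter n f w)) by (apply Hc; lra).
    specialize (H3 c (Nat.iter n f w) (Nat.iter n f z)). lra.
Qed.

Lemma stepL (X : Type) d (f : X -> X) (Hd : is_metric X d) (Hf : is_continuous X d f) :
  trans d f -> forall l y r e, 0 < r -> 0 < e -> exists y' r', 0 < r' /\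
   (forall z, d y' z <= r' -> d y z <= r) /\
   forall c, In c l -> exists n, (1 <= n)%nat /\ forall z, d y' z <= r' -> d c (Nat.iter n f z) < e.
Proof.
  intros Ht l. induction l as [|c l IH]; intros y r e Hr He.
  - exists y, r. split; [exact Hr|split]; [intros z Hz; exact Hz|intros c []].
  - destruct (step1 X d f Hd Hf Ht y r c e Hr He) as (y1 & r1 & Hr1 & Hi1 & n1 & Hn1 & Hc1).
    destruct (IH y1 r1 e Hr1 He) as (y2 & r2 & Hr2 & Hi2 & Hc2).
    exists y2, r2. split; [exact Hr2|split].
    + intros z Hz. apply Rlt_le, Hi1, Hi2, Hz.
    + intros c' [<-|Hin].
      * exists n1. split; [exact Hn1|]. intros z Hz. apply Hc1, Hi2, Hz.
      * apply Hc2, Hin.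
Qed.

Lemma le_max_l (l : list nat) i : In i l -> (i <= fold_right max 0 l)%nat.
Proof. induction l; simpl; [intros []|intros [->|H]; [lia|specialize (IHl H); lia]]. Qed.

Lemma TP (X : Type) d (f : X -> X) (Hne : inhabited X) (Hd : is_metric X d)
  (Hc : is_compact X d) (Hf : is_continuous X d f) :
  trans d f -> exists x, forall U, is_open X d U -> (exists y, U y) ->
    exists n, (1 <= n)%nat /\ U (Nat.iter n f x).
Proof.
  intros Ht. pose proof Hd as (H0 & H1 & H2 & H3).
  assert (Hz : forall c, d c c = 0) by (intros c'; apply H1; auto).
  destruct Hne as [y0].
  assert (Hrp : forall m, 0 < / INR (S m)).
  { intros m. apply Rinv_0_lt_compat, lt_0_INR. lia. }
  assert (Hnet : forall m : nat, exists l : list X, forall x, exists c, In c l /\ d c x < / INR (S m)).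
  { intros m. apply (Hc X (fun c z => d c z < / INR (S m))).
    - intros c; apply open_ball; auto.
    - intros x. exists x. rewrite Hz. auto. }
  set (L := fun m => proj1_sig (constructive_indefinite_description _ (Hnet m))).
  assert (HL : forall m x, exists c, In c (L m) /\ d c x < / INR (S m)).
  { intros m. exact (proj2_sig (constructive_indefinite_description _ (Hnet m))). }
  assert (Hg : forall (m : nat) (p : X * R), exists p' : X * R,
    0 < snd p -> 0 < snd p' /\ (forall z, d (fst p') z <= snd p' -> d (fst p) z <= snd p) /\
    forall c, In c (L m) -> exists n, (1 <= n)%nat /\
      forall z, d (fst p') z <= snd p' -> d c (Nat.iter n f z) < / INR (S m)).
  { intros m [y r]. destruct (Rlt_dec 0 r) as [Hr|Hr].
    - destruct (stepL X d f Hd Hf Ht (L m) y r (/ INR (S m)) Hr (Hrp m))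
        as (y' & r' & A & B & C). exists (y', r'). auto.
    - exists (y, r). simpl. intros; lra. }
  set (g := fun m p => proj1_sig (constructive_indefinite_description _ (Hg m p))).
  assert (Hgs : forall m p, 0 < snd p -> 0 < snd (g m p) /\
    (forall z, d (fst (g m p)) z <= snd (g m p) -> d (fst p) z <= snd p) /\
    forall c, In c (L m) -> exists n, (1 <= n)%nat /\
      forall z, d (fst (g m p)) z <= snd (g m p) -> d c (Nat.iter n f z) < / INR (S m)).
  { intros m p. exact (proj2_sig (constructive_indefinite_description _ (Hg m p))). }
  set (s := fix s (m : nat) : X * R := match m with O => (y0, 1) | S k => g k (s k) end).
  assert (Hpos : forall m, 0 < snd (s m)).
  { induction m; simpl; [lra|]. apply (Hgs m (s m) IHm). }
  assert (Hnest : forall m k z, d (fst (s (k + m)%nat)) z <= snd (s (k + m)%nat) ->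
     d (fst (s m)) z <= snd (s m)).
  { intros m k. induction k as [|k IH]; intros z Hzz; auto.
    apply IH. simpl in Hzz. apply (Hgs (k + m)%nat _ (Hpos _)). exact Hzz. }
  assert (Hint : exists z, forall m, d (fst (s m)) z <= snd (s m)).
  { apply NNPP. intros Hno.
    destruct (Hc nat (fun m z => snd (s m) < d (fst (s m)) z)) as [l Hl].
    - intros m z Hzz. exists (d (fst (s m)) z - snd (s m)). split; [lra|].
      intros y Hy. specialize (H3 (fst (s m)) y z). rewrite (H2 y z) in H3. lra.
    - intros z. apply NNPP. intros Hn. apply Hno. exists z. intros m.
      apply Rnot_lt_le. intros Hl. apply Hn. exists m. auto.
    - set (M := fold_right max 0%nat l).
      destruct (Hl (fst (s M))) as (i & Hi & Hlt).
      assert (Hle := le_max_l l i Hi).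
      replace M with ((M - i) + i)%nat in Hlt by lia.
      assert (d (fst (s i)) (fst (s (M - i + i)%nat)) <= snd (s i)).
      { apply (Hnest i (M - i)%nat). rewrite Hz. apply Rlt_le, Hpos. }
      lra. }
  destruct Hint as [x Hx]. exists x.
  intros U HU [u Uu]. destruct (HU u Uu) as (eps & Heps & HB).
  destruct (archimed_cor1 (eps / 2)) as (N & HN & HN0); [lra|].
  assert (HrN : / INR (S N) < eps / 2).
  { apply Rle_lt_trans with (/ INR N); auto. apply Rinv_le_contravar.
    apply lt_0_INR; lia. apply le_INR; lia. }
  destruct (HL N u) as (c & Hcin & Hcu).
  destruct (Hgs N (s N) (Hpos N)) as (_ & _ & Hcov).
  destruct (Hcov c Hcin) as (n & Hn & Hhit).
  exists n. split; auto. apply HB.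
  assert (d c (Nat.iter n f x) < / INR (S N)) by (apply Hhit, (Hx (S N))).
  specialize (H3 u c (Nat.iter n f x)). rewrite (H2 u c) in H3. lra.
Qed.

Definition tpoint {X : Type} (d : X -> X -> R) (f : X -> X) (x : X) : Prop :=
  forall U, is_open X d U -> (exists y, U y) -> exists n, (1 <= n)%nat /\ U (Nat.iter n f x).

Lemma wm_thickN (X : Type) d (f : X -> X) (Hf : is_continuous X d f) :
  weakly_mixing d f -> forall U, is_open X d U -> (exists x, U x) ->
  forall n, exists a, (1 <= a)%nat /\ forall k, (k <= n)%nat ->
      exists z, U z /\ U (Nat.iter (a + k) f z).
Proof.
  intros Hw U HU HUn n.
  destruct (furst X d f Hf Hw U HU HUn n) as (A & B & HA & HB & HAn & HBn & HP).
  destruct (wm_trans X d f Hw A B HA HB HAn HBn) as (m & w & Hm & Aw & Bw).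
  exists m; split; auto. intros k Hk. apply (HP m w); auto.
Qed.

Lemma visit_diff (X : Type) d (f : X -> X) (Hf : is_continuous X d f) x :
  tpoint d f x -> forall U, is_open X d U -> forall e, (1 <= e)%nat ->
  (exists z, U z /\ U (Nat.iter e f z)) -> diffset (visitN f x U) e.
Proof.
  intros Ht U HU e He Hz.
  destruct (Ht (fun z => U z /\ U (Nat.iter e f z))) as (b & Hb & Ub1 & Ub2); auto.
  { apply open_inter; auto. apply open_pre; auto. }
  exists (e + b)%nat, b. rewrite iterE in Ub2. repeat split; auto; lia.
Qed.

Lemma diff_N (X : Type) (f : X -> X) x U e :
  diffset (visitN f x U) e -> (1 <= e)%nat /\ exists z, U z /\ U (Nat.iter e f z).
Proof.
  intros (a & b & [Ha Ua] & [Hb Ub] & Hab & ->). split; [lia|].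
  exists (Nat.iter b f x). split; auto. rewrite iterE.
  replace (a - b + b)%nat with a by lia. auto.
Qed.

Lemma point_trans (X : Type) d (f : X -> X) x :
  (forall U, is_open X d U -> (exists y, U y) -> forall N, exists e, (N <= e)%nat /\
     diffset (visitN f x U) e) -> trans d f.
Proof.
  intros H U V HU HV HUn HVn.
  destruct (H U HU HUn 0%nat) as (e & _ & a & b & _ & [Hb Ub] & _).
  destruct (H V HV HVn (S b)) as (e' & He' & a' & b' & [Ha' Va'] & _ & Hab' & E').
  exists (a' - b)%nat, (Nat.iter b f x). repeat split; auto; try lia.
  rewrite iterE. replace (a' - b + b)%nat with a' by lia. auto.
Qed.

Lemma thick_unb F : thick F -> forall N, exists e, (N <= e)%nat /\ F e.
Proof. intros H N. destruct (H N) as (a & Ha & Hk). exists (a + N)%nat. split; [lia|auto]. Qed.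

Lemma cof_unb F : cofinite F -> forall N, exists e, (N <= e)%nat /\ F e.
Proof. intros [m H] N. exists (S (m + N)). split; [lia|]. apply H; lia. Qed.

Lemma wm_dir (X : Type) d (f : X -> X) (Hf : is_continuous X d f) x :
  tpoint d f x -> weakly_mixing d f -> transitive_point d f (nabla thick) x.
Proof.
  intros Ht Hw U HU HUn n.
  destruct (wm_thickN X d f Hf Hw U HU HUn n) as (a & Ha & Hk).
  exists a; split; auto. intros k Hkn. apply (visit_diff X d f Hf x Ht U HU); auto; lia.
Qed.

Lemma sm_dir (X : Type) d (f : X -> X) (Hf : is_continuous X d f) x :
  tpoint d f x -> strongly_mixing d f -> transitive_point d f (nabla cofinite) x.
Proof.
  intros Ht Hs U HU HUn.
  destruct (Hs U U HU HU HUn HUn) as [m Hm].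
  exists m. intros n Hn Hmn. apply (visit_diff X d f Hf x Ht U HU); auto.
  destruct (Hm n Hn Hmn) as (_ & z & Uz & Uz'). eauto.
Qed.

Lemma sm_conv (X : Type) d (f : X -> X) (Hf : is_continuous X d f) x :
  transitive_point d f (nabla cofinite) x -> strongly_mixing d f.
Proof.
  intros Hx. assert (Ht : trans d f).
  { apply (point_trans X d f x). intros U HU HUn. apply cof_unb, Hx; auto. }
  intros U V HU HV HUn HVn.
  destruct (Ht U V HU HV HUn HVn) as (m & w & Hm & Uw & Vw).
  set (W := fun z => U z /\ V (Nat.iter m f z)).
  assert (HW : is_open X d W) by (apply open_inter; auto; apply open_pre; auto).
  destruct (Hx W HW (ex_intro _ w (conj Uw Vw))) as [M HM].
  exists (S (M + m)). intros n Hn HMn. split; auto.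
  destruct (diff_N X f x W (n - m)%nat (HM (n - m)%nat ltac:(lia) ltac:(lia)))
    as (_ & z & [Uz _] & [_ Vz]).
  exists z. split; auto. rewrite iterE in Vz. replace (m + (n - m))%nat with n in Vz by lia. auto.
Qed.

Lemma wm_conv (X : Type) d (f : X -> X) (Hd : is_metric X d) (Hf : is_continuous X d f) x :
  transitive_point d f (nabla thick) x -> weakly_mixing d f.
Proof.
  intros Hx. assert (Ht : trans d f).
  { apply (point_trans X d f x). intros U HU HUn. apply thick_unb, Hx; auto. }
  intros W1 W2 HW1 HW2 [p Wp] [q Wq].
  destruct (HW1 p Wp) as (e1 & He1 & H1). destruct (HW2 q Wq) as (e2 & He2 & H2).
  set (U1 := fun z => d (fst p) z < e1). set (V1 := fun z => d (snd p) z < e1).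
  set (U2 := fun z => d (fst q) z < e2). set (V2 := fun z => d (snd q) z < e2).
  assert (Hz : forall c, d c c = 0) by (intros c; apply Hd; auto).
  assert (OU1 : is_open X d U1) by apply open_ball, Hd.
  assert (OV1 : is_open X d V1) by apply open_ball, Hd.
  assert (OU2 : is_open X d U2) by apply open_ball, Hd.
  assert (OV2 : is_open X d V2) by apply open_ball, Hd.
  destruct (Ht U1 U2 OU1 OU2) as (P & u & HP & Uu & Uu');
    [exists (fst p); unfold U1; rewrite Hz; lra|exists (fst q); unfold U2; rewrite Hz; lra|].
  destruct (Ht V1 V2 OV1 OV2) as (Q & v & HQ & Vv & Vv');
    [exists (snd p); unfold V1; rewrite Hz; lra|exists (snd q); unfold V2; rewrite Hz; lra|].
  set (U1' := fun z => U1 z /\ U2 (Nat.iter P f z)).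
  set (V1' := fun z => V1 z /\ V2 (Nat.iter Q f z)).
  assert (OU1' : is_open X d U1') by (apply open_inter; auto; apply open_pre; auto).
  assert (OV1' : is_open X d V1') by (apply open_inter; auto; apply open_pre; auto).
  destruct (Ht U1' V1' OU1' OV1') as (s & w & Hs & Uw & Vw); [exists u; split; auto|exists v; split; auto|].
  set (W := fun z => U1' z /\ V1' (Nat.iter s f z)).
  assert (OW : is_open X d W) by (apply open_inter; auto; apply open_pre; auto).
  destruct (Hx W OW (ex_intro _ w (conj Uw Vw)) (P + Q)%nat) as (a & Ha & Hk).
  destruct (diff_N X f x W _ (Hk Q ltac:(lia))) as (_ & z1 & [[Uz1 _] _] & [[_ Uz1'] _]).
  destruct (diff_N X f x W _ (Hk P ltac:(lia))) as (_ & z2 & [_ [Vz2 _]] & [_ [_ Vz2']]).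
  exists (a + Q + P)%nat. split; [lia|].
  exists (z1, Nat.iter s f z2). split.
  - apply H1; simpl; [exact Uz1|exact Vz2].
  - rewrite iter_prod. simpl. apply H2; simpl.
    + rewrite iterE in Uz1'. replace (a + Q + P)%nat with (P + (a + Q))%nat by lia. exact Uz1'.
    + rewrite !iterE in Vz2'. rewrite iterE.
      replace (a + Q + P + s)%nat with (Q + s + (a + P))%nat by lia. exact Vz2'.
Qed.

Theorem theorem3p7 (X : Type) (d : X -> X -> R) (f : X -> X)
  (Hne : inhabited X) (Hd : is_metric X d) (Hc : is_compact X d) (Hf : is_continuous X d f) :
  (weakly_mixing d f <-> point_transitive d f (nabla thick)) /\
  (strongly_mixing d f <-> point_transitive d f (nabla cofinite)).
Proof.
  split; split.
  - intros Hw. destruct (TP X d f Hne Hd Hc Hf (wm_trans X d f Hw)) as [x Hx].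
    exists x. apply (wm_dir X d f Hf x Hx Hw).
  - intros [x Hx]. apply (wm_conv X d f Hd Hf x Hx).
  - intros Hs. destruct (TP X d f Hne Hd Hc Hf (sm_trans X d f Hs)) as [x Hx].
    exists x. apply (sm_dir X d f Hf x Hx Hs).
  - intros [x Hx]. apply (sm_conv X d f Hf x Hx).
Qed.
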